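(* Let $(S,g)$ be a timed dynamical system. Then the unique timing map $\tau$ on $(S,g)$ is given by $\tau_s=\sup\{n\in\mathbb{N}: g^n(w)=s\text{ for some }w\in S\}$ (with value $\infty$ if the set is unbounded).
   Context: A dynamical system is a pair $(S,g)$ with $S$ a set and $g:S\to S$. A state $s$ is initial if $s\neq g(w)$ for every $w\in S$. A timing map is a map $\tau:S\to\mathbb{N}\cup\{\infty\}$ such that (a) $\tau_s=0$ for every initial state $s$, and (b) $\tau_{g(s)}=\tau_s+1$ for all $s$ (with $\infty+1=\infty$). The system is timed if a timing map exists. *)

(* Defs.v *)
From Stdlib Require Import Arith.

Inductive natinf : Type := Fin (n : nat) | Inf.

Definition succ_inf (x : natinf) : natinf :=
  match x with Fin n => Fin (S n) | Inf => Inf end.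

Definition iter {S : Type} (g : S -> S) (n : nat) (w : S) : S := Nat.iter n g w.

Definition initial {S : Type} (g : S -> S) (s : S) : Prop :=
  forall w : S, s <> g w.

Definition timing_map {S : Type} (g : S -> S) (tau : S -> natinf) : Prop :=
  (forall s, initial g s -> tau s = Fin 0) /\
  (forall s, tau (g s) = succ_inf (tau s)).

Definition timed {S : Type} (g : S -> S) : Prop :=
  exists tau, timing_map g tau.

Definition is_sup_natinf (A : nat -> Prop) (x : natinf) : Prop :=
  match x with
  | Fin n => A n /\ (forall m, A m -> m <= n)
  | Inf => forall n, exists m, A m /\ n < m
  end.

(* Main.v *)
Require Import Defs.
From Stdlib Require Import Arith Lia FunctionalExtensionality Classical.

Lemma iter_S_r {T : Type} (g : T -> T) n w : iter g (S n) w = iter g n (g w).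
Proof. unfold iter. induction n; simpl in *; congruence. Qed.

Lemma iter_S_l {T : Type} (g : T -> T) n w : iter g (S n) w = g (iter g n w).
Proof. reflexivity. Qed.

Lemma tau_iter {T : Type} (g : T -> T) tau : timing_map g tau ->
  forall n w, tau (iter g n w) = match tau w with Fin k => Fin (n + k) | Inf => Inf end.
Proof.
  intros [_ H2] n w. induction n.
  - simpl. destruct (tau w); reflexivity.
  - rewrite iter_S_l, H2, IHn. destruct (tau w); reflexivity.
Qed.

Lemma preimage {T : Type} (g : T -> T) tau : timing_map g tau ->
  forall s, tau s <> Fin 0 -> exists w, s = g w.
Proof.
  intros [H1 _] s Hs. apply NNPP. intro Hn. apply Hs, H1.
  intros w E. apply Hn. exists w. exact E.
Qed.

Lemma back_fin {T : Type} (g : T -> T) tau : timing_map g tau ->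
  forall k s, tau s = Fin k -> exists w, iter g k w = s.
Proof.
  intros Ht k. induction k; intros s Hs.
  - exists s. reflexivity.
  - destruct (preimage g tau Ht s) as [w' ->]. { rewrite Hs. discriminate. }
    destruct Ht as [H1 H2]. rewrite H2 in Hs.
    destruct (tau w') eqn:E; simpl in Hs; inversion Hs; subst.
    destruct (IHk w' E) as [w Hw]. exists w. rewrite iter_S_l, Hw. reflexivity.
Qed.

Lemma back_inf {T : Type} (g : T -> T) tau : timing_map g tau ->
  forall n s, tau s = Inf -> exists w, iter g n w = s /\ tau w = Inf.
Proof.
  intros Ht n. induction n; intros s Hs.
  - exists s. split; [reflexivity | exact Hs].
  - destruct (IHn s Hs) as [w [Hw Hi]].
    destruct (preimage g tau Ht w) as [w' ->]. { rewrite Hi. discriminate. }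
    exists w'. split.
    + rewrite iter_S_r. exact Hw.
    + destruct Ht as [_ H2]. rewrite H2 in Hi. destruct (tau w'); simpl in Hi; congruence.
Qed.

Lemma char {T : Type} (g : T -> T) tau : timing_map g tau ->
  forall s, is_sup_natinf (fun n => exists w : T, iter g n w = s) (tau s).
Proof.
  intros Ht s. destruct (tau s) eqn:E; simpl.
  - split.
    + exact (back_fin g tau Ht n s E).
    + intros m [w Hw]. pose proof (tau_iter g tau Ht m w) as HT. rewrite Hw, E in HT.
      destruct (tau w); inversion HT; lia.
  - intros n. destruct (back_inf g tau Ht (S n) s E) as [w [Hw _]].
    exists (S n). split; [exists w; exact Hw | lia].
Qed.

Lemma sup_uniq (A : nat -> Prop) x y : is_sup_natinf A x -> is_sup_natinf A y -> x = y.
Proof.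
  destruct x as [n|], y as [m|]; simpl; intros Hx Hy.
  - destruct Hx as [Ax Bx], Hy as [Ay By]. f_equal. specialize (Bx m Ay). specialize (By n Ax). lia.
  - destruct Hx as [_ Bx]. destruct (Hy n) as [k [Ak Lk]]. specialize (Bx k Ak). lia.
  - destruct Hy as [_ By]. destruct (Hx m) as [k [Ak Lk]]. specialize (By k Ak). lia.
  - reflexivity.
Qed.

Theorem fact5p1 (S : Type) (g : S -> S) (Htimed : timed g) :
  (exists! tau : S -> natinf, timing_map g tau) /\
  (forall tau : S -> natinf, timing_map g tau ->
     forall s : S,
       is_sup_natinf (fun n => exists w : S, iter g n w = s) (tau s)).
Proof.
  split.
  - destruct Htimed as [tau Ht]. exists tau. split; [exact Ht|].
    intros tau' Ht'. apply functional_extensionality. intros s.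
    exact (sup_uniq _ _ _ (char g tau Ht s) (char g tau' Ht' s)).
  - exact (char g).
Qed.
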